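(* Let $P$ be a grid polygon and let $\pi$ be a shortest path in $P$ between two cells of $P$. Then its length satisfies $|\pi|\le \frac12 E(P)-2$.
   Context: The plane is tiled by unit square cells indexed by $(x,y)\in\mathbb{Z}^2$; two cells are adjacent if they share an edge. A grid polygon $P$ is a finite nonempty set of cells connected under adjacency (it may contain holes, i.e. bounded regions of cells not in $P$). $E(P)$ is the number of unit edges shared by a cell of $P$ and a cell not in $P$. A path in $P$ is a sequence of cells of $P$ in which consecutive cells are adjacent; its length is the number of steps, i.e. the number of cells minus one. *)

(* Defs.v *)
From mathcomp Require Import all_boot all_order all_algebra.
Set Implicit Arguments. Unset Strict Implicit. Unset Printing Implicit Defensive.
Import GRing.Theory Num.Theory.

Definition cell := (int * int)%type.

Definition adj (c d : cell) : bool :=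
  (absz (c.1 - d.1)%R + absz (c.2 - d.2)%R == 1)%N.

Definition neighbors (c : cell) : seq cell :=
  [:: ((c.1 + 1)%R, c.2); ((c.1 - 1)%R, c.2);
      (c.1, (c.2 + 1)%R); (c.1, (c.2 - 1)%R)].

(* A finite set of cells is represented by a sequence (membership = \in;
   duplicates are irrelevant). *)

Definition E (P : seq cell) : nat :=
  \sum_(c <- undup P) count (fun d => d \notin P) (neighbors c).

(* s is (the tail of) a path in P from x to y: the path is x :: s,
   every cell lies in P, consecutive cells are adjacent, and it ends at y.
   Its length (number of steps) is size s. *)
Definition is_path_in (P : seq cell) (x y : cell) (s : seq cell) : bool :=
  [&& all (fun c => c \in P) (x :: s), path adj x s & last x s == y].

Definition connected (P : seq cell) : Prop :=
  forall x y, x \in P -> y \in P -> exists s, is_path_in P x y s.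

Definition grid_polygon (P : seq cell) : Prop := P != [::] /\ connected P.

Definition shortest_path (P : seq cell) (x y : cell) (s : seq cell) : Prop :=
  is_path_in P x y s /\
  forall t, is_path_in P x y t -> (size s <= size t)%N.

(* Main.v *)
Require Import Defs.
From mathcomp Require Import all_boot all_order all_algebra.
From mathcomp Require Import zify ring lra.
Import GRing.Theory Num.Theory.
Local Open Scope ring_scope.

Definition dirs : seq cell := [:: (1,0); (-1,0); (0,1); (0,-1)].
Definition mv (w c : cell) : cell := (c.1 + w.1, c.2 + w.2).
Definition pt (c w : cell) (k : int) : cell := (c.1 + k * w.1, c.2 + k * w.2).
Definition negd (w : cell) : cell := (- w.1, - w.2).
Definition dot (w c : cell) : int := c.1 * w.1 + c.2 * w.2.

Lemma dirsP w : w \in dirs ->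
  w = (1,0) \/ w = (-1,0) \/ w = (0,1) \/ w = (0,-1).
Proof. by rewrite !inE => /or4P [] /eqP ->; tauto. Qed.

Lemma negd_dirs w : w \in dirs -> negd w \in dirs.
Proof. by move/dirsP => [->|[->|[->|->]]]. Qed.

Lemma adj_mv c d : adj c d -> exists2 w, w \in dirs & d = mv w c.
Proof.
case: c d => [c1 c2] [d1 d2]; rewrite /adj /= => /eqP h.
have : (d1 = c1 + 1 /\ d2 = c2 + 0) \/ (d1 = c1 + -1 /\ d2 = c2 + 0) \/
       (d1 = c1 + 0 /\ d2 = c2 + 1) \/ (d1 = c1 + 0 /\ d2 = c2 + -1) by lia.
case=> [[-> ->]|[[-> ->]|[[-> ->]|[-> ->]]]].
- by exists (1,0).
- by exists (-1,0).
- by exists (0,1).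
- by exists (0,-1).
Qed.

Lemma adj_mvr c w : w \in dirs -> adj c (mv w c).
Proof.
case: c => c1 c2; rewrite /adj /mv /=.
move/dirsP => [->|[->|[->|->]]] /=; apply/eqP; lia.
Qed.

Lemma pt0 c w : pt c w 0 = c.
Proof. by case: c => a b; rewrite /pt /= !mul0r !addr0. Qed.

Lemma ptS c w (k : nat) : pt c w k.+1%:Z = mv w (pt c w k%:Z).
Proof. rewrite /pt /mv /=; congr (_,_); rewrite -addn1 PoszD; ring. Qed.

Lemma pt_mv c w (k : nat) : pt (mv w c) w k%:Z = pt c w k.+1%:Z.
Proof. rewrite /pt /mv /=; congr (_,_); rewrite -addn1 PoszD; ring. Qed.

Fixpoint st (P : seq cell) (w : cell) (n : nat) (c : cell) : cell :=
  if n is n'.+1 then (if mv w c \in P then st P w n' (mv w c) else c) else c.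

Lemma st_spec P w n c : c \in P -> exists k : nat,
  [/\ (k <= n)%N, st P w n c = pt c w k%:Z,
      (forall j : nat, (j <= k)%N -> pt c w j%:Z \in P) &
      (mv w (st P w n c) \notin P \/ k = n)].
Proof.
elim: n c => [|n IH] c cP.
  exists 0%N; split => //; first by rewrite pt0.
  - by move=> j; rewrite leqn0 => /eqP ->; rewrite pt0.
  - by right.
rewrite /=; case: ifP => hm.
  have [k [hk hst hall hend]] := IH _ hm.
  exists k.+1; split => //.
  - by rewrite hst pt_mv.
  - case=> [|j] hj; first by rewrite pt0.
    by rewrite -pt_mv; apply: hall.
  - by case: hend => [?|->]; [left|right].
exists 0%N; split => //; first by rewrite pt0.
- by move=> j; rewrite leqn0 => /eqP ->; rewrite pt0.
- by left; rewrite hm.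
Qed.

Lemma pt_inj c w (i j : nat) : w \in dirs -> pt c w i%:Z = pt c w j%:Z -> i = j.
Proof.
rewrite /pt; move/dirsP => [->|[->|[->|->]]] /= [h1 h2]; lia.
Qed.

Definition S P w c := st P w (size P) c.

Lemma S_spec P w c : w \in dirs -> c \in P -> exists k : nat,
  [/\ S P w c = pt c w k%:Z,
      (forall j : nat, (j <= k)%N -> pt c w j%:Z \in P) &
      mv w (S P w c) \notin P].
Proof.
move=> wd cP; have [k [hk hst hall hend]] := st_spec P w (size P) c cP.
exists k; split => //; case: hend => // ek.
have : (size (map (fun j : nat => pt c w j%:Z) (iota 0 (size P).+1)) <= size P)%N.
  apply: uniq_leq_size.
    rewrite map_inj_uniq ?iota_uniq // => i j; exact: pt_inj.
  move=> b /mapP [j]; rewrite mem_iota add0n => /andP [_ hj] ->.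
  by apply: hall; rewrite ek -ltnS.
by rewrite size_map size_iota ltnn.
Qed.

Lemma seg P w z (m : nat) : w \in dirs ->
  (forall j : nat, (j <= m)%N -> pt z w j%:Z \in P) ->
  exists t, is_path_in P z (pt z w m%:Z) t /\ size t = m.
Proof.
move=> wd; elim: m => [|m IH] hall.
  exists [::]; rewrite /is_path_in /= pt0 eqxx andbT; split => //.
  by have := hall 0%N (leq0n _); rewrite pt0 => ->.
have [t [ht st]] : exists t, is_path_in P z (pt z w m%:Z) t /\ size t = m.
  by apply: IH => j hj; apply: hall; exact: leqW.
exists (rcons t (pt z w m.+1%:Z)); split; last by rewrite size_rcons st.
move: ht; rewrite /is_path_in => /and3P [ha hp /eqP hl].
apply/and3P; split.
- by rewrite -rcons_cons all_rcons ha andbT hall.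
- by rewrite rcons_path hp hl ptS adj_mvr.
- by rewrite last_rcons.
Qed.

Lemma sp_suffix P c d s y : shortest_path P c y (d :: s) -> shortest_path P d y s.
Proof.
rewrite /shortest_path /is_path_in => -[/and3P [ha hp hl] hmin].
move: ha => /= /andP [cP ha]; move: hp => /= /andP [hcd hp].
split; first by apply/and3P.
move=> t /and3P [ta tp tl].
have := hmin (d :: t); rewrite /= ltnS; apply.
by rewrite cP ta hcd tp tl.
Qed.

Lemma sp_prefix P c y p q : shortest_path P c y (p ++ q) -> shortest_path P c (last c p) p.
Proof.
rewrite /shortest_path /is_path_in => -[/and3P [ha hp hl] hmin].
rewrite -cat_cons all_cat in ha; case/andP: ha => ha1 ha2.
rewrite cat_path in hp; case/andP: hp => hp1 hp2.
split; first by rewrite ha1 hp1 eqxx.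
move=> t /and3P [ta tp /eqP tl].
have := hmin (t ++ q); rewrite !size_cat leq_add2r; apply.
rewrite -cat_cons all_cat ta ha2 cat_path tp tl hp2 /=.
by rewrite last_cat tl -last_cat.
Qed.

Fixpoint pc (w c : cell) (p : seq cell) : nat :=
  if p is d :: p' then ((dot w d == dot w c) : nat) + pc w d p' else 0.

Lemma dot_step w c d : w \in dirs -> adj c d ->
  (absz (dot w d - dot w c) + (dot w d == dot w c) = 1)%N.
Proof.
move=> wd /adj_mv [v vd ->].
have -> : dot w (mv v c) = dot w c + dot w v by rewrite /dot /mv /=; ring.
have -> : (dot w c + dot w v == dot w c) = (dot w v == 0).
  by rewrite -subr_eq0 addrAC subrr add0r.
rewrite addrAC subrr add0r.
by move/dirsP: wd => [->|[->|[->|->]]]; move/dirsP: vd => [->|[->|[->|->]]].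
Qed.

Lemma dot_path w c p : w \in dirs -> path adj c p ->
  (absz (dot w (last c p) - dot w c) + pc w c p <= size p)%N.
Proof.
move=> wd; elim: p c => [|d p IH] c /=; first by rewrite subrr.
case/andP=> hcd hp; have := IH d hp; have := dot_step w c d wd hcd.
case: (dot w d == dot w c) => /=; lia.
Qed.

Lemma dot_pt w z k : w \in dirs -> dot w (pt z w k) = dot w z + k.
Proof.
rewrite /dot /pt; move/dirsP => [->|[->|[->|->]]] /=; ring.
Qed.

Lemma shift_eq c e w (a b : nat) : w \in dirs -> pt c w a%:Z = pt e w b%:Z ->
  (a <= b)%N -> forall j : nat, (j <= b - a)%N ->
  pt c (negd w) j%:Z = pt e w (b - a - j)%N%:Z.
Proof.
case: c e => c1 c2 [e1 e2] wd; rewrite /pt /negd.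
move/dirsP: wd => [->|[->|[->|->]]] /= [h1 h2] hab j hj; congr (_,_); lia.
Qed.

Lemma shift_eq2 c e w (a b : nat) : w \in dirs -> pt c w a%:Z = pt e w b%:Z ->
  (b <= a)%N -> e = pt c w (a - b)%N%:Z.
Proof.
case: c e => c1 c2 [e1 e2] wd; rewrite /pt.
move/dirsP: wd => [->|[->|[->|->]]] /= [h1 h2] hab; congr (_,_); lia.
Qed.

Arguments shift_eq {c e w a b}.
Arguments shift_eq2 {c e w a b}.

Lemma key P w c p : w \in dirs -> shortest_path P c (last c p) p ->
  S P w c = S P w (last c p) -> pc w c p = 0%N.
Proof.
move=> wd hsp hS; set e := last c p in hsp hS.
case: (hsp) => /and3P [ha hp _] hmin.
have cP : c \in P by move: ha => /= /andP [].
have eP : e \in P by move/allP: ha; apply; exact: mem_last.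
have [a [hSa halla _]] := S_spec P w c wd cP.
have [b [hSb hallb _]] := S_spec P w e wd eP.
rewrite hSa hSb in hS.
have hdot := dot_path w c p wd hp.
have hd : dot w c + a = dot w e + b.
  by rewrite -!dot_pt // hS.
have [t [ht szt]] : exists t, is_path_in P c e t /\ size t = absz (a%:Z - b%:Z).
  case: (leqP a b) => hab.
    have := seg P (negd w) c (b - a) (negd_dirs w wd).
    rewrite (shift_eq wd hS hab (b - a)%N (leqnn _)) subnn.
    have -> : pt e w 0%N%:Z = e by exact: pt0.
    case.
      move=> j hj; rewrite (shift_eq wd hS hab j hj); apply: hallb.
      by rewrite -subnDA leq_subr.
    move=> t [ht szt]; exists t; split.
      by [].
    rewrite szt; lia.
  have hba := ltnW hab.
  have := seg P w c (a - b) wd.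
  rewrite -(shift_eq2 wd hS hba).
  case.
    by move=> j hj; apply: halla; apply: leq_trans hj (leq_subr _ _).
  move=> t [ht szt]; exists t; split => //.
  rewrite szt; lia.
have := hmin t ht; rewrite szt.
move: hdot; rewrite -/e; lia.
Qed.
Arguments sp_suffix {P c d s y}.
Arguments sp_prefix {P c y p q}.

Fixpoint bl P w (c : cell) (s : seq cell) : seq cell :=
  if s is d :: s' then
    (if dot w d == dot w c then S P w c :: bl P w d s' else bl P w d s')
  else [:: S P w c].

Lemma size_bl P w c s : size (bl P w c s) = (pc w c s).+1.
Proof.
elim: s c => [|d s IH] c //=; case: ifP => _ /=; by rewrite IH.
Qed.

Lemma mem_bl P w c s b : b \in bl P w c s ->
  exists i, b = S P w (last c (take i s)).
Proof.
elim: s c => [|d s IH] c /=; first by rewrite inE => /eqP ->; exists 0%N.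
have hrec : b \in bl P w d s -> exists i, b = S P w (last c (take i (d :: s))).
  by move/IH => [i ->]; exists i.+1.
case: ifP => _ //; rewrite inE => /orP [/eqP ->|]; last exact: hrec.
by exists 0%N.
Qed.

Lemma uniq_bl P w c s y : w \in dirs -> shortest_path P c y s -> uniq (bl P w c s).
Proof.
move=> wd; elim: s c => [|d s IH] c hsp //=.
have hsp' := sp_suffix hsp.
case: ifP => hperp; last exact: IH hsp'.
rewrite /= (IH _ hsp') andbT; apply/negP => /mem_bl [i hi].
have hsp2 : shortest_path P c y (take i.+1 (d :: s) ++ drop i.+1 (d :: s)).
  by rewrite cat_take_drop.
have := key P w c _ wd (sp_prefix hsp2).
by rewrite /= hperp hi; move/(_ erefl).
Qed.


Lemma count_dir P w x y s : w \in dirs -> shortest_path P x y s ->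
  ((pc w x s).+1 <= count (fun b => mv w b \notin P) (undup P))%N.
Proof.
move=> wd hsp; rewrite -(size_bl P w x s) -size_filter.
apply: uniq_leq_size; first exact: uniq_bl wd hsp.
case: hsp => /and3P [ha _ _] _.
move=> b /mem_bl [i ->]; set e := last x (take i s).
have eP : e \in P.
  move/allP: ha; apply; rewrite /e.
  have := mem_last x (take i s); rewrite !inE => /orP [->//|h].
  by rewrite (mem_take h) orbT.
have [k [_ _ hout]] := S_spec P w e wd eP.
rewrite mem_filter hout /= mem_undup.
have [k' [-> hall _]] := S_spec P w e wd eP.
exact: hall k' (leqnn _).
Qed.

Definition dR : cell := (1,0).
Definition dL : cell := (-1,0).
Definition dU : cell := (0,1).
Definition dD : cell := (0,-1).

Lemma E_split P : E P =
  (count (fun b => mv dR b \notin P) (undup P) +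
   count (fun b => mv dL b \notin P) (undup P) +
   count (fun b => mv dU b \notin P) (undup P) +
   count (fun b => mv dD b \notin P) (undup P))%N.
Proof.
rewrite /E; elim: (undup P) => [|c l IH]; first by rewrite big_nil.
rewrite big_cons IH /= /neighbors /mv /dR /dL /dU /dD /= !addr0.
case: (_ \in P); case: (_ \in P); case: (_ \in P); case: (_ \in P) => /=; lia.
Qed.

Lemma pcX c s : pc dL c s = pc dR c s.
Proof.
elim: s c => [|d s IH] c //=; rewrite IH; congr (nat_of_bool _ + _)%N.
by rewrite /dot /dL /dR /dU /dD /=; apply/eqP/eqP; lia.
Qed.

Lemma pcY c s : pc dD c s = pc dU c s.
Proof.
elim: s c => [|d s IH] c //=; rewrite IH; congr (nat_of_bool _ + _)%N.
by rewrite /dot /dL /dR /dU /dD /=; apply/eqP/eqP; lia.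
Qed.

Lemma pcXY c s : path adj c s -> (pc dR c s + pc dU c s = size s)%N.
Proof.
elim: s c => [|d s IH] c //= /andP [hcd hp].
have := IH d hp; move/eqP: hcd; rewrite /adj /dot /dR /dU /=.
case: eqP; case: eqP => /=; lia.
Qed.

Theorem lemma4 (P : seq cell) (x y : cell) (s : seq cell) :
  grid_polygon P -> shortest_path P x y s ->
  ((size s)%:R <= (E P)%:R / 2 - 2 :> rat)%R.
Proof.
move=> _ hsp.
have h1 := count_dir P dR x y s isT hsp.
have h2 := count_dir P dL x y s isT hsp.
have h3 := count_dir P dU x y s isT hsp.
have h4 := count_dir P dD x y s isT hsp.
rewrite pcX in h2; rewrite pcY in h4.
have hp : path adj x s by case: hsp => /and3P [].
have hxy := pcXY x s hp.
have hE : (2 * size s + 4 <= E P)%N by rewrite E_split; lia.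
have : ((2 * size s + 4)%N%:R <= (E P)%:R :> rat) by rewrite ler_nat.
rewrite natrD natrM => h.
lra.
Qed.
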